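(* Let $k\ge 2$, let $B=M\cup\{\omega_1,\ldots,\omega_p\}$ with $p\ge 1$ and $\omega_1,\ldots,\omega_p\in P_k\setminus M$, and let $F$ be a finite system of functions from $P_k(n)$. Then $$I_B(F)\ge\left\lceil \log_{d(B)+1}\bigl(d(F)+1\bigr)\right\rceil .$$
   Context: Let $k\ge 2$ be an integer and $E_k=\{0,1,\ldots,k-1\}$. $P_k(n)$ denotes the set of all functions $E_k^n\to E_k$, and $P_k=\bigcup_n P_k(n)$. Tuples in $E_k^n$ are ordered componentwise: $\tilde\alpha\le\tilde\beta$ iff $\alpha_j\le\beta_j$ for all $j$. A function $f$ is monotone if $\tilde\alpha\le\tilde\beta$ implies $f(\tilde\alpha)\le f(\tilde\beta)$; $M$ is the set of all monotone functions in $P_k$ (of all arities, including constants). A basis is a set $B=M\cup\{\omega_1,\ldots,\omega_p\}$ with $p\ge1$ and $\omega_i\in P_k\setminus M$. A circuit over $B$ with inputs $x_1,\ldots,x_n$ is a finite directed acyclic graph whose source nodes are labelled by the variables $x_1,\ldots,x_n$ and each of whose other nodes (gates) is labelled by a $q$-ary function from $B$ and has $q$ ordered incoming edges; each node computes a function of $P_k(n)$ in the obvious way. A circuit realizes a system $F$ of functions of $x_1,\ldots,x_n$ if every function of $F$ is computed at some node. Gates labelled by functions of $M$ have weight $0$, gates labelled by some $\omega_i$ have weight $1$. The non-monotone complexity $I_B(S)$ of a circuit $S$ is the sum of the weights of its gates; $I_B(F)$ is the minimum of $I_B(S)$ over all circuits $S$ over $B$ realizing $F$, and $I_B(f)=I_B(\{f\})$.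 A chain is a sequence $\tilde\alpha_1,\ldots,\tilde\alpha_r$ of pairwise distinct tuples of $E_k^n$ with $\tilde\alpha_i\le\tilde\alpha_{i+1}$ for $i=1,\ldots,r-1$. A pair $(\tilde\alpha,\tilde\beta)$ with $\tilde\alpha\le\tilde\beta$ is a jump for a system $F$ if $f(\tilde\alpha)>f(\tilde\beta)$ for at least one $f\in F$. For a chain $C=(\tilde\alpha_1,\ldots,\tilde\alpha_r)$, the decrease $d_C(F)$ is the number of $i\in\{1,\ldots,r-1\}$ such that $(\tilde\alpha_i,\tilde\alpha_{i+1})$ is a jump for $F$. The decrease $d(F)$ is the maximum of $d_C(F)$ over all chains $C$ in $E_k^n$; $d(f)=d(\{f\})$. Finally $d(B)=\max\{d(\omega_1),\ldots,d(\omega_p)\}$. *)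

(* Defs.v *)
From mathcomp Require Import all_boot.
Set Implicit Arguments. Unset Strict Implicit. Unset Printing Implicit Defensive.

Definition tup (k n : nat) := {ffun 'I_n -> 'I_k}.
Definition fn (k n : nat) := {ffun tup k n -> 'I_k}.

Definition leT (k n : nat) (a b : tup k n) : bool := [forall j, a j <= b j].

Definition monotoneb (k n : nat) (f : fn k n) : bool :=
  [forall a : tup k n, forall b : tup k n, leT a b ==> (f a <= f b)].

Definition jumpb (k n : nat) (F : seq (fn k n)) (a b : tup k n) : bool :=
  leT a b && has (fun f : fn k n => f b < f a) F.

Definition chainb (k n : nat) (s : seq (tup k n)) : bool :=
  uniq s && sorted (@leT k n) s.

Definition dC (k n : nat) (F : seq (fn k n)) (s : seq (tup k n)) : nat :=
  count (fun p => jumpb F p.1 p.2) (zip s (behead s)).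

(* decrease d(F): maximum over all chains (a chain has at most #|E_k^n|
   elements since its entries are pairwise distinct) *)
Definition dec (k n : nat) (F : seq (fn k n)) : nat :=
  \max_(r < #|{: tup k n}|.+1)
     \max_(s : r.-tuple (tup k n) | chainb s) dC F s.

(* basis B = M ∪ om; d(B) = max over the ω_i *)
Definition decB (k : nat) (om : seq {q : nat & fn k q}) : nat :=
  \max_(w <- om) dec [:: tagged w].

(* Circuits with n inputs: the nodes are numbered 0..m-1, nodes 0..n-1 are
   the input variables, each further node is a gate whose inputs are
   earlier nodes (this is a topological ordering of the DAG). *)
Record gate (k m : nat) := Gate {
  garity : nat;
  glab : fn k garity;
  gargs : 'I_garity -> 'I_m }.

Inductive circuit (k n : nat) : nat -> Type :=
| cnil : circuit k n n
| csnoc (m : nat) : circuit k n m -> gate k m -> circuit k n m.+1.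

Fixpoint nodefun (k n m : nat) (C : circuit k n m) : 'I_m -> tup k n -> 'I_k :=
  match C in circuit _ _ m0 return 'I_m0 -> tup k n -> 'I_k with
  | cnil => fun i a => a i
  | @csnoc _ _ m' C' g =>
      fun i a =>
        match unlift ord_max i with
        | Some j => nodefun C' j a
        | None => glab g [ffun j => nodefun C' (@gargs _ _ g j) a]
        end
  end.

Fixpoint over_basis (k n m : nat) (om : seq {q : nat & fn k q})
    (C : circuit k n m) : Prop :=
  match C with
  | cnil => True
  | @csnoc _ _ m' C' g =>
      over_basis om C' /\
      (monotoneb (glab g) \/ (Tagged (fn k) (glab g) \in om))
  end.

Fixpoint Icost (k n m : nat) (C : circuit k n m) : nat :=
  match C with
  | cnil => 0
  | @csnoc _ _ m' C' g => Icost C' + ~~ monotoneb (glab g)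
  end.

Definition realizes (k n m : nat) (C : circuit k n m) (F : seq (fn k n)) : Prop :=
  forall f, f \in F -> exists i : 'I_m, forall a, nodefun C i a = f a.

(* Main.v *)
Require Import Defs.
From mathcomp Require Import all_boot.
From mathcomp Require Import zify.

Set Implicit Arguments. Unset Strict Implicit. Unset Printing Implicit Defensive.

Section Cnt.
Variable T : Type.
Fixpoint cntp (R : T -> T -> bool) (x : T) (s : seq T) : nat :=
  match s with [::] => 0 | y :: s' => R x y + cntp R y s' end.

Lemma cntp_cat R x s1 s2 : cntp R x (s1 ++ s2) = cntp R x s1 + cntp R (last x s1) s2.
Proof. by elim: s1 x => [|y s1 IH] x //=; rewrite IH addnA. Qed.

Lemma cntp_mono (E R1 R2 : T -> T -> bool) x s :
  path E x s -> (forall a b, E a b -> R1 a b -> R2 a b) -> cntp R1 x s <= cntp R2 x s.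
Proof.
elim: s x => [|y s IH] x //= /andP[Exy Hp] H.
apply: leq_add; last exact: IH.
by case: (R1 x y) (H x y Exy) => // ->.
Qed.

Lemma cntp_mono' (R1 R2 : T -> T -> bool) x s :
  (forall a b, R1 a b -> R2 a b) -> cntp R1 x s <= cntp R2 x s.
Proof.
move=> H; apply: (@cntp_mono (fun _ _ => true)); last by move=> a b _; apply: H.
by elim: s x => //= y s IH x.
Qed.

Lemma cntp0_path R x s : cntp R x s = 0 -> path (fun a b => ~~ R a b) x s.
Proof.
elim: s x => [|y s IH] x //=; case: (R x y) => //= H.
by apply: IH.
Qed.

Lemma cntpPQ (P Q : T -> T -> bool) x t : cntp P x t = 0 ->
  cntp (fun a b => P a b || Q a b) x t = cntp Q x t.
Proof.
elim: t x => [|y t IHt] x //=.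
by case: (P x y) => //= H; rewrite IHt.
Qed.

Lemma segment (P Q : T -> T -> bool) D :
  (forall x t, cntp P x t = 0 -> cntp Q x t <= D) ->
  forall s x t, cntp P x t = 0 ->
    cntp (fun a b => P a b || Q a b) x (t ++ s) <= D + cntp P (last x t) s * D.+1.
Proof.
move=> HQ; elim=> [|z s IH] x t Ht.
  by rewrite cats0 /= addn0 cntpPQ // HQ.
rewrite cntp_cat /=.
have E1 : cntp (fun a b => P a b || Q a b) x t <= D.
  by rewrite cntpPQ // HQ.
case HP: (P (last x t) z) => /=.
  have := IH z [::] erefl; rewrite /= => H2.
  rewrite add1n; lia.
have := IH x (t ++ [:: z]).
rewrite cntp_cat /= HP Ht last_cat /= -catA /= cntp_cat /= HP => H2.
have := H2 erefl; rewrite add0n; lia.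
Qed.
End Cnt.

Definition JC k n m (C : circuit k n m) (a b : tup k n) : bool :=
  [exists i, nodefun C i b < nodefun C i a].

Definition argsv k n m (C : circuit k n m) (g : gate k m) (a : tup k n) : tup k (garity g) :=
  [ffun j => nodefun C (@gargs _ _ g j) a].

Lemma JC_snoc k n m (C : circuit k n m) g a b :
  JC (csnoc C g) a b = JC C a b || (glab g (argsv C g b) < glab g (argsv C g a)).
Proof.
apply/existsP/orP.
  case=> i /=; case: unliftP => [j _|_].
    by move=> H; left; apply/existsP; exists j.
  by move=> H; right.
case=> [/existsP[j Hj]|H].
  by exists (lift ord_max j); rewrite /= liftK.
by exists ord_max; rewrite /= unlift_none.
Qed.

Lemma leT_trans k n : transitive (@leT k n).
Proof.
move=> b a c /forallP H1 /forallP H2; apply/forallP => j.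
exact: leq_trans (H1 j) (H2 j).
Qed.

Lemma leT_anti k n (a b : tup k n) : leT a b -> leT b a -> a = b.
Proof.
move=> /forallP H1 /forallP H2; apply/ffunP => j; apply/val_inj/eqP.
by rewrite eqn_leq H1 H2.
Qed.

Fixpoint dd k n (y : tup k n) (u : seq (tup k n)) : seq (tup k n) :=
  match u with
  | [::] => [::]
  | z :: u' => if z == y then dd y u' else z :: dd z u'
  end.

Definition ltT k n (a b : tup k n) := leT a b && (a != b).

Lemma dd_path k n (y : tup k n) u : path (@leT k n) y u -> path (@ltT k n) y (dd y u).
Proof.
elim: u y => [|z u IH] y //= /andP[Hyz Hp].
case: eqP => [Ezy|/eqP Hne]; first by subst z; apply: IH.
rewrite /= /ltT Hyz eq_sym Hne /=; exact: IH.
Qed.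

Lemma dd_cnt k n (R : tup k n -> tup k n -> bool) y u :
  (forall a, R a a = false) -> cntp R y u = cntp R y (dd y u).
Proof.
move=> Hr; elim: u y => [|z u IH] y //=.
case: eqP => [->|_]; first by rewrite Hr add0n IH.
by rewrite /= IH.
Qed.

Lemma ltT_trans k n : transitive (@ltT k n).
Proof.
move=> b a c /andP[H1 N1] /andP[H2 N2]; rewrite /ltT (leT_trans H1 H2) /=.
apply/eqP=> E; subst c; move/eqP: N1; apply; exact: leT_anti.
Qed.

Lemma dC_cntp k n (F : seq (fn k n)) x s : dC F (x :: s) = cntp (jumpb F) x s.
Proof.
rewrite /dC /=; elim: s x => [|y s IH] x //=.
by rewrite -IH.
Qed.

Lemma dec_ge k n (F : seq (fn k n)) (s : seq (tup k n)) : chainb s -> dC F s <= dec F.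
Proof.
move=> Hc.
have Hs : size s < #|{: tup k n}|.+1.
  rewrite ltnS; move: Hc => /andP[/card_uniqP <- _]; exact: max_card.
rewrite /dec.
apply: leq_trans (leq_bigmax (Ordinal Hs)).
have := @leq_bigmax_cond _ (fun t : (size s).-tuple (tup k n) => chainb t)
   (fun t => dC F t) (in_tuple s) Hc.
done.
Qed.

Lemma omega_bound k q (f : fn k q) y u :
  path (@leT k q) y u -> cntp (fun a b => f b < f a) y u <= dec [:: f].
Proof.
move=> Hp.
rewrite (@dd_cnt k q (fun a b => f b < f a)); last by move=> a; rewrite ltnn.
have Hl := dd_path Hp.
have Hc : chainb (y :: dd y u).
  rewrite /chainb; apply/andP; split.
    apply: (@sorted_uniq _ _ (@ltT_trans k q)); last exact: Hl.
    by move=> a; rewrite /ltT eqxx andbF.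
  by apply: sub_path Hl => a b /andP[].
apply: leq_trans (dec_ge [:: f] Hc).
rewrite dC_cntp.
apply: (cntp_mono Hl) => a b /andP[Hab _] H.
by rewrite /jumpb Hab /= H.
Qed.

Lemma main k n m (om : seq {q : nat & fn k q}) (C : circuit k n m) :
  over_basis om C -> forall x s, path (@leT k n) x s ->
  cntp (JC C) x s < (decB om).+1 ^ Icost C.
Proof.
elim: C => [|m' C IH g] /=.
  move=> _ x s Hp; rewrite expn0 ltnS leqn0; apply/eqP.
  elim: s x Hp => [|y s IHs] x //= /andP[Hxy Hp].
  rewrite IHs // addn0.
  rewrite /JC; case: existsP => // [[i]]; move/forallP: Hxy => /(_ i); rewrite /= leqNgt.
  by move=> /negbTE ->.
move=> [Hob Hg] x s Hp.
have IHC := IH Hob.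
case Hm: (monotoneb (glab g)) => /=.
  rewrite addn0.
  apply: leq_ltn_trans (IHC x s Hp).
  apply: cntp_mono' => a b; rewrite JC_snoc => /orP[H0|H]; first exact: H0.
  case: (boolP (JC C a b)) => // /negP Hn; exfalso.
  have Hab : leT (argsv C g a) (argsv C g b).
    apply/forallP => j; rewrite !ffunE leqNgt; apply/negP => Hj.
    by apply: Hn; apply/existsP; exists (@gargs _ _ g j).
  move/forallP: Hm => /(_ (argsv C g a)) /forallP /(_ (argsv C g b)).
  by rewrite Hab /= leqNgt H.
have Hin : Tagged (fn k) (glab g) \in om by case: Hg; rewrite ?Hm.
set D := decB om.
have HD : dec [:: glab g] <= D.
  by rewrite /D /decB; exact: (@leq_bigmax_seq _ om (fun _ => true) (fun w : {q : nat & fn k q} => dec [:: tagged w]) _ Hin erefl).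
have HQ : forall x t, cntp (JC C) x t = 0 ->
   cntp (fun a b => glab g (argsv C g b) < glab g (argsv C g a)) x t <= D.
  move=> x0 t Ht; apply: leq_trans HD.
  have Hp0 := cntp0_path Ht.
  have -> : cntp (fun a b => glab g (argsv C g b) < glab g (argsv C g a)) x0 t =
     cntp (fun a b => glab g b < glab g a) (argsv C g x0) (map (argsv C g) t).
    by elim: t x0 {Ht Hp0} => //= y t IHt x0; rewrite IHt.
  apply: omega_bound.
  elim: t x0 {Ht} Hp0 => //= y t IHt x0 /andP[Hxy Hp1].
  apply/andP; split; last exact: IHt.
  apply/forallP => j; rewrite !ffunE leqNgt; apply/negP => Hj.
  by move/existsP: Hxy; apply; exists (@gargs _ _ g j).
have Hseg := @segment _ (JC C) _ D HQ s x [::] erefl.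
rewrite /= in Hseg.
have Hc := IHC x s Hp.
have E : cntp (JC (csnoc C g)) x s =
   cntp (fun a b => JC C a b || (glab g (argsv C g b) < glab g (argsv C g a))) x s.
  by elim: s x {Hp Hseg Hc} => //= y s IHs x; rewrite IHs JC_snoc.
rewrite E addn1 expnS.
set c := cntp (JC C) x s in Hseg Hc.
set pw := D.+1 ^ Icost C in Hc *.
apply: leq_ltn_trans Hseg _.
have : c.+1 * D.+1 <= pw * D.+1 by rewrite leq_mul2r Hc orbT.
rewrite mulnC [pw * _]mulnC; lia.
Qed.

Theorem theorem1 (k : nat) (hk : 2 <= k) (om : seq {q : nat & fn k q})
  (hp : om != [::]) (hom : forall w, w \in om -> ~~ monotoneb (tagged w))
  (n : nat) (F : seq (fn k n)) (m : nat) (C : circuit k n m) :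
  over_basis om C -> realizes C F ->
  up_log (decB om).+1 (dec F).+1 <= Icost C.
Proof.
move=> Hob Hr.
case HD: (decB om) => [|D].
  by rewrite /up_log /=.
apply: up_log_min => //.
rewrite -HD.
have Xp : 0 < (decB om).+1 ^ Icost C by rewrite expn_gt0.
set X := (decB om).+1 ^ Icost C in Xp *.
suff : dec F <= X - 1 by move=> H; rewrite -(prednK Xp) ltnS -subn1.
apply/bigmax_leqP => r _; apply/bigmax_leqP => s Hs.
suff : dC F s < X by move=> H; rewrite subn1 -ltnS prednK.
case: s Hs => [[|x s'] /= _] Hs.
  by [].
move: Hs; rewrite /chainb /= => /andP[_ Hp].
rewrite dC_cntp.
apply: leq_ltn_trans (main Hob Hp).
apply: cntp_mono' => a b /andP[_ /hasP[f Hf Hlt]].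
have [i Hi] := Hr f Hf.
by apply/existsP; exists i; rewrite !Hi.
Qed.
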